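(* Let $A$ be an observable on $\mathbb C^d$ with orthonormal eigenbasis $\{\varphi_k\}_{k=0}^{d-1}$. For all unit vectors $\Phi,\Psi\in\mathbb C^d$, $$d(T_{A\Phi}\Psi,\Psi)\le d(\Psi,\Phi).$$
   Context: $\mathcal H=\mathbb C^d$ with the standard inner product; states are unit vectors. An observable $A$ is non-degenerate and identified with its orthonormal eigenbasis $\{\varphi_k\}_{k=0}^{d-1}$. Bures metric: $d(\Phi,\Psi)=\sqrt{2-2|\langle\Phi,\Psi\rangle|}$. Physical imposition operator: for a unit vector $\Phi$ (the generator state), $T_{A\Phi}\Psi=\sum_{k=0}^{d-1}|\langle\varphi_k,\Phi\rangle|\,u_k(\Psi)\,\varphi_k$, where $u_k(\Psi)=\langle\varphi_k,\Psi\rangle/|\langle\varphi_k,\Psi\rangle|$ if $\langle\varphi_k,\Psi\rangle\ne0$ and $u_k(\Psi)=1$ otherwise. Note $T_{A\Phi}\Psi$ is again a unit vector. *)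

(* Defs.v *)
(* The complex field C^d is modelled over an arbitrary
   numClosedFieldType C (the complex numbers are an instance). *)
From HB Require Import structures.
From mathcomp Require Import all_boot all_order all_algebra.
Set Implicit Arguments. Unset Strict Implicit. Unset Printing Implicit Defensive.
Import Order.TTheory GRing.Theory Num.Theory.
Local Open Scope ring_scope.

Definition inner (C : numClosedFieldType) (d : nat) (x y : 'cV[C]_d) : C :=
  \sum_(i < d) (x i 0)^* * y i 0.

Definition unit_vec (C : numClosedFieldType) (d : nat) (x : 'cV[C]_d) : Prop :=
  inner x x = 1.

(* An orthonormal family of d vectors in C^d (= an orthonormal eigenbasis
   identifying a non-degenerate observable A). *)
Definition onb (C : numClosedFieldType) (d : nat)
  (phi : 'I_d -> 'cV[C]_d) : Prop :=
  forall j k : 'I_d, inner (phi j) (phi k) = (j == k)%:R.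

Definition bures (C : numClosedFieldType) (d : nat) (x y : 'cV[C]_d) : C :=
  sqrtC (2 - 2 * `|inner x y|).

Definition phase (C : numClosedFieldType) (c : C) : C :=
  if c != 0 then c / `|c| else 1.

Definition imposition (C : numClosedFieldType) (d : nat)
  (phi : 'I_d -> 'cV[C]_d) (Phi Psi : 'cV[C]_d) : 'cV[C]_d :=
  \sum_(k < d) (`|inner (phi k) Phi| * phase (inner (phi k) Psi)) *: phi k.

(* Main.v *)
Require Import Defs.
From HB Require Import structures.
From mathcomp Require Import all_boot all_order all_algebra.
Import Order.TTheory GRing.Theory Num.Theory.
Local Open Scope ring_scope.

Lemma onb_complete (C : numClosedFieldType) (d : nat)
  (phi : 'I_d -> 'cV[C]_d) (Hphi : onb phi) (i j : 'I_d) :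
  \sum_(k < d) phi k i 0 * (phi k j 0)^* = (i == j)%:R.
Proof.
pose U : 'M[C]_d := \matrix_(i, k) phi k i 0.
pose V : 'M[C]_d := \matrix_(k, j) (phi k j 0)^*.
have HVU : V *m U = 1%:M.
  apply/matrixP => k l; rewrite !mxE -Hphi /inner.
  by apply: eq_bigr => m _; rewrite !mxE.
have := mulmx1C HVU => /matrixP /(_ i j); rewrite !mxE => <-.
by apply: eq_bigr => m _; rewrite !mxE.
Qed.

Lemma parseval (C : numClosedFieldType) (d : nat)
  (phi : 'I_d -> 'cV[C]_d) (Hphi : onb phi) (x y : 'cV[C]_d) :
  inner x y = \sum_(k < d) (inner (phi k) x)^* * inner (phi k) y.
Proof.
rewrite /inner.
transitivity (\sum_(i < d) \sum_(j < d) (x i 0)^* * y j 0 *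
   \sum_(k < d) phi k i 0 * (phi k j 0)^*).
  apply: eq_bigr => i _; rewrite (bigD1 i) //= onb_complete // eqxx mulr1.
  rewrite big1 ?addr0 // => j /negbTE; rewrite onb_complete // eq_sym => ->.
  by rewrite mulr0.
symmetry.
transitivity (\sum_(k < d) \sum_(i < d) \sum_(j < d)
   (x i 0)^* * y j 0 * (phi k i 0 * (phi k j 0)^*)).
  apply: eq_bigr => k _.
  rewrite rmorph_sum /= big_distrl /=; apply: eq_bigr => i _.
  rewrite big_distrr /=; apply: eq_bigr => j _.
  rewrite rmorphM /= conjCK.
  by rewrite mulrACA mulrC.
rewrite exchange_big /=; apply: eq_bigr => i _.
rewrite exchange_big /=; apply: eq_bigr => j _.
by rewrite big_distrr.
Qed.

Lemma phase_conjM (C : numClosedFieldType) (b : C) : (phase b)^* * b = `|b|.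
Proof.
rewrite /phase; case: eqP => [-> | /eqP nz] /=; first by rewrite mulr0 normr0.
rewrite rmorphM /= fmorphV /= [`|b|^*]geC0_conj //.
by rewrite mulrAC -normCKC expr2 mulfK // normr_eq0.
Qed.

Lemma inner_imp (C : numClosedFieldType) (d : nat)
  (phi : 'I_d -> 'cV[C]_d) (Phi Psi : 'cV[C]_d) :
  inner (imposition phi Phi Psi) Psi =
  \sum_(k < d) `|inner (phi k) Phi| * `|inner (phi k) Psi|.
Proof.
rewrite /inner /imposition.
transitivity (\sum_(i < d) \sum_(k < d)
  (`|inner (phi k) Phi| * phase (inner (phi k) Psi))^* * ((phi k i 0)^* * Psi i 0)).
  apply: eq_bigr => i _; rewrite summxE rmorph_sum /= big_distrl /=.
  by apply: eq_bigr => k _; rewrite mxE rmorphM /= mulrA.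
rewrite exchange_big /=; apply: eq_bigr => k _.
rewrite -big_distrr /= -/(inner (phi k) Psi) rmorphM /= geC0_conj //.
by rewrite -mulrA phase_conjM.
Qed.

Theorem proposition2 (C : numClosedFieldType) (d : nat)
  (phi : 'I_d -> 'cV[C]_d) (Hphi : onb phi)
  (Phi Psi : 'cV[C]_d) (HPhi : unit_vec Phi) (HPsi : unit_vec Psi) :
  bures (imposition phi Phi Psi) Psi <= bures Psi Phi.
Proof.
set a := fun k => inner (phi k) Phi.
set b := fun k => inner (phi k) Psi.
set S := \sum_(k < d) `|a k| * `|b k|.
have S0 : 0 <= S by apply: sumr_ge0 => k _; rewrite mulr_ge0.
have sq : forall x : 'cV[C]_d, unit_vec x ->
    \sum_(k < d) `|inner (phi k) x| ^+ 2 = 1.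
  move=> x Hx; rewrite -Hx /unit_vec (@parseval _ _ _ Hphi x x).
  by apply: eq_bigr => k _; rewrite normCKC.
have HxS : `|inner Psi Phi| <= S.
  rewrite (@parseval _ _ _ Hphi) /S; apply: le_trans (ler_norm_sum _ _ _) _.
  by rewrite le_eqVlt; apply/orP; left; apply/eqP; apply: eq_bigr => k _;
    rewrite normrM norm_conjC mulrC.
have HS1 : S <= 1.
  apply: le_trans (_ : \sum_(k < d) (`|a k| ^+ 2 + `|b k| ^+ 2) / 2 <= 1).
    apply: ler_sum => k _.
    by rewrite (real_leif_mean_square (normr_real _) (normr_real _)).
  rewrite -mulr_suml big_split /= sq // sq // mulfV //.
  by rewrite -[1 + 1]/(2%:R) pnatr_eq0.
rewrite /bures inner_imp -/a -/b -/S (ger0_norm S0).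
rewrite ler_sqrtC ?qualifE /=.
- by rewrite lerD2l lerN2 ler_pM2l ?ltr0n.
- by rewrite subr_ge0 -[2]mulr1 -mulrA ler_pM2l ?ltr0n // mul1r.
- by rewrite subr_ge0 -[2]mulr1 -mulrA ler_pM2l ?ltr0n // mul1r (le_trans HxS).
Qed.
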